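(* Let $f\in C_{\mathbb{R}}[0,1]$, $u\in(0,1]$ and $\rho>0$. If $f(u)\neq0$, then there exist a constant $d>0$ and a sequence $\{\rho_k\}_{k\ge1}$ with $\rho_k\to+\infty$ such that $|\Phi_{f,u}(\rho_k)|>\rho e^{d\rho_k}$ for all $k\ge1$.
   Context: $C_{\mathbb{R}}[0,1]$ denotes the real-valued continuous functions on $[0,1]$. For $f\in C[0,1]$ and $u\in(0,1]$, $\Phi_{f,u}(z)=\int_0^u f(s)e^{(u-s)z}\,ds$ ($z\in\mathbb{C}$). *)

(* Defs.v *)
From Stdlib Require Import Reals.
From Coquelicot Require Import Coquelicot.
Open Scope R_scope.

Definition continuous_on_01 (f : R -> R) : Prop :=
  forall x, 0 <= x <= 1 ->
    filterlim f (within (fun y => 0 <= y <= 1) (locally x)) (locally (f x)).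

(* Phi_{f,u}(z) = \int_0^u f(s) e^{(u-s) z} ds, evaluated at a real point z
   (for real z and real f this is a real number). *)
Definition Phi (f : R -> R) (u z : R) : R :=
  RInt (fun s => f s * exp ((u - s) * z)) 0 u.

(* Main.v *)
Require Import Defs.
From Stdlib Require Import Reals.
From Coquelicot Require Import Coquelicot.
From Stdlib Require Import Lra Lia Factorial Classical IndefiniteDescription.
Open Scope R_scope.

Definition clamp (s : R) := Rmax 0 (Rmin 1 s).

Lemma clamp_in s : 0 <= clamp s <= 1.
Proof. unfold clamp, Rmax, Rmin. repeat destruct Rle_dec; lra. Qed.

Lemma clamp_id s : 0 <= s <= 1 -> clamp s = s.
Proof. intros. unfold clamp, Rmax, Rmin. repeat destruct Rle_dec; lra. Qed.

Lemma clamp_lip s t : Rabs (clamp t - clamp s) <= Rabs (t - s).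
Proof. unfold clamp, Rmax, Rmin. repeat destruct Rle_dec; unfold Rabs; repeat destruct Rcase_abs; lra. Qed.

Lemma clamp_cont (f : R -> R) : continuous_on_01 f ->
  forall s, continuous (fun t => f (clamp t)) s.
Proof.
  intros Hf s. unfold continuous.
  eapply filterlim_comp with (G := within (fun y => 0 <= y <= 1) (locally (clamp s))).
  2: apply Hf, clamp_in.
  intros P HP. unfold within in HP. destruct HP as [eps Heps].
  exists eps. intros y Hy. apply Heps. 2: apply clamp_in.
  unfold ball in *; simpl in *. unfold AbsRing_ball in *. unfold abs, minus, plus, opp in *; simpl in *.
  eapply Rle_lt_trans. apply clamp_lip. exact Hy.
Qed.


Lemma exp_pow z m : exp z ^ m = exp (INR m * z).
Proof.
  induction m. simpl. rewrite Rmult_0_l, exp_0. reflexivity.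
  rewrite S_INR. simpl. rewrite IHm, <- exp_plus. f_equal. ring.
Qed.

Definition Sp (N : nat) (y : R) := sum_f_R0 (fun m => y ^ m / INR (fact m) * (-1) ^ m) N.

Lemma taylor_bound N y : 0 < y -> Rabs (exp (- y) - Sp N y) <= y ^ (S N) / INR (fact (S N)).
Proof.
  intros Hy.
  assert (He : forall k t, ex_derive_n exp k t).
  { intros [|k] t. exact I. simpl. apply ex_derive_ext with exp.
    intros; symmetry; apply is_derive_n_unique, is_derive_n_exp. auto_derive; auto. }
  assert (Hd : forall m t, Derive_n (fun t => exp (- t)) m t = (-1) ^ m * exp (- t)).
  { intros. apply is_derive_n_unique. apply is_derive_n_comp_opp.
    apply filter_forall. intros; apply He. apply is_derive_n_exp. }
  destruct (Taylor_Lagrange (fun t => exp (- t)) N 0 y Hy) as [z [Hz E]].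
  { intros t _ [|k] _. exact I. simpl. apply ex_derive_ext with (fun t => (-1)^k * exp (-t)).
    intros; symmetry; apply Hd. auto_derive; auto. }
  rewrite E. unfold Sp.
  replace (sum_f_R0 (fun m : nat => (y - 0) ^ m / INR (fact m) * Derive_n (fun t : R => exp (- t)) m 0) N)
    with (sum_f_R0 (fun m : nat => y ^ m / INR (fact m) * (-1) ^ m) N).
  2: { apply sum_eq. intros. rewrite Hd, Rminus_0_r, Ropp_0, exp_0. ring. }
  rewrite Hd. ring_simplify (y - 0).
  match goal with |- Rabs ?a <= _ => replace a with (y ^ S N / INR (fact (S N)) * ((-1) ^ S N * exp (- z))) by ring end.
  rewrite Rabs_mult, Rabs_mult, pow_1_abs.
  rewrite (Rabs_right (y ^ S N / INR (fact (S N)))).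
  2: { apply Rle_ge. apply Rdiv_le_0_compat. apply pow_le; lra. apply INR_fact_lt_0. }
  rewrite <- (Rmult_1_r (y ^ S N / INR (fact (S N)))) at 2.
  apply Rmult_le_compat_l. apply Rdiv_le_0_compat. apply pow_le; lra. apply INR_fact_lt_0.
  rewrite Rmult_1_l, Rabs_right. 2: left; apply exp_pos.
  rewrite <- exp_0. left. apply exp_increasing. lra.
Qed.

Lemma exint (F h : R -> R) a b : (forall s, continuous F s) -> (forall s, ex_derive h s) ->
  ex_RInt (fun s => F s * h s) a b.
Proof.
  intros HF Hh. apply (ex_RInt_continuous (V:=R_CompleteNormedModule)). intros z _.
  apply (continuous_mult F h). apply HF. apply (ex_derive_continuous (K:=R_AbsRing) (V:=R_NormedModule)), Hh.
Qed.


Definition ya u a x s := exp (x * (u - a - s)).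

Definition Tm (F : R -> R) (u a1 a2 x : R) (m : nat) :=
  (-1) ^ m / INR (fact m) * (exp (- (INR m * x * a2)) - exp (- (INR m * x * a1))) * Phi F u (INR m * x).

Lemma Sp_S N y : Sp (S N) y = Sp N y + y ^ S N / INR (fact (S N)) * (-1) ^ S N.
Proof. reflexivity. Qed.

Lemma ex_Phi (F : R -> R) (u z : R) : (forall s : R, continuous F s) -> forall a b, ex_RInt (fun s => F s * exp ((u - s) * z)) a b.
Proof. intros HF a b. apply exint. exact HF. intros; auto_derive; auto. Qed.

Lemma interchange (F : R -> R) (u a1 a2 x : R) : (forall s : R, continuous F s) -> forall N,
  ex_RInt (fun s => F s * (Sp N (ya u a2 x s) - Sp N (ya u a1 x s))) 0 u /\
  RInt (fun s => F s * (Sp N (ya u a2 x s) - Sp N (ya u a1 x s))) 0 u = sum_f_R0 (Tm F u a1 a2 x) N.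
Proof.
  intros HF.
  assert (Hterm : forall (m : nat) (s : R), F s * (ya u a2 x s ^ m / INR (fact m) * (-1) ^ m - ya u a1 x s ^ m / INR (fact m) * (-1) ^ m)
     = scal ((-1) ^ m / INR (fact m) * (exp (- (INR m * x * a2)) - exp (- (INR m * x * a1))))
            (F s * exp ((u - s) * (INR m * x)))).
  { intros m s. unfold ya. rewrite !exp_pow.
    replace (INR m * (x * (u - a2 - s))) with (- (INR m * x * a2) + (u - s) * (INR m * x)) by ring.
    replace (INR m * (x * (u - a1 - s))) with (- (INR m * x * a1) + (u - s) * (INR m * x)) by ring.
    rewrite !exp_plus. change (scal ?a ?b) with (a * b).
    set (e1 := exp (- (INR m * x * a2))). set (e2 := exp (- (INR m * x * a1))). set (e3 := exp ((u - s) * (INR m * x))).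
    set (p := (-1)^m). set (q := INR (fact m)). unfold Rdiv. ring. }
  assert (Hex : forall m, ex_RInt (fun s => F s * (ya u a2 x s ^ m / INR (fact m) * (-1) ^ m - ya u a1 x s ^ m / INR (fact m) * (-1) ^ m)) 0 u).
  { intros m. 
    assert (H1 := ex_RInt_scal (V := R_NormedModule) _ 0 u ((-1) ^ m / INR (fact m) * (exp (- (INR m * x * a2)) - exp (- (INR m * x * a1)))) (ex_Phi F u (INR m * x) HF 0 u)).
    apply (ex_RInt_ext (V := R_NormedModule) _ _ _ _ (fun s _ => eq_sym (Hterm m s)) H1). }
  assert (Hint : forall m, RInt (fun s => F s * (ya u a2 x s ^ m / INR (fact m) * (-1) ^ m - ya u a1 x s ^ m / INR (fact m) * (-1) ^ m)) 0 u = Tm F u a1 a2 x m).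
  { intros m. rewrite (RInt_ext (V := R_CompleteNormedModule) _ _ _ _ (fun s _ => Hterm m s)).
    rewrite (RInt_scal (V := R_CompleteNormedModule)). 2: apply ex_Phi; auto.
    reflexivity. }
  induction N.
  - split.
    + apply (ex_RInt_ext (V := R_NormedModule) _ _ _ _ (fun s _ => eq_refl) (Hex 0%nat)).
    + simpl sum_f_R0. rewrite <- (Hint 0%nat). reflexivity.
  - destruct IHN as [IH1 IH2].
    set (A := fun s : R => F s * (Sp N (ya u a2 x s) - Sp N (ya u a1 x s))).
    set (B := fun s : R => F s * (ya u a2 x s ^ S N / INR (fact (S N)) * (-1) ^ S N - ya u a1 x s ^ S N / INR (fact (S N)) * (-1) ^ S N)).
    assert (Eq : forall s : R, F s * (Sp (S N) (ya u a2 x s) - Sp (S N) (ya u a1 x s)) = A s + B s).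
    { intros s. unfold A, B. rewrite !Sp_S.
      set (T2 := ya u a2 x s ^ S N / INR (fact (S N)) * (-1) ^ S N).
      set (T1 := ya u a1 x s ^ S N / INR (fact (S N)) * (-1) ^ S N).
      set (S2 := Sp N (ya u a2 x s)). set (S1 := Sp N (ya u a1 x s)). ring. }
    split.
    + apply (ex_RInt_ext (V := R_NormedModule) _ _ _ _ (fun s _ => eq_sym (Eq s))).
      apply (ex_RInt_plus (V := R_NormedModule)). exact IH1. exact (Hex (S N)).
      rewrite (RInt_ext (V := R_CompleteNormedModule) _ _ _ _ (fun s _ => Eq s)).
      change (RInt (fun s => A s + B s) 0 u) with (RInt (fun s => plus (A s) (B s)) 0 u).
      rewrite (RInt_plus (V := R_CompleteNormedModule) A B). 2: exact IH1. 2: exact (Hex (S N)).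
      change (sum_f_R0 ?f (S ?n)) with (sum_f_R0 f n + f (S n)). rewrite <- IH2, <- Hint. reflexivity.
Qed.


Lemma exp_neg_le y : 0 <= y -> exp (- y) <= / (1 + y).
Proof.
  intros Hy. rewrite exp_Ropp. apply Rinv_le_contravar. lra. apply exp_ineq1_le.
Qed.

Lemma exp_neg_ge y : 1 - y <= exp (- y).
Proof. assert (H := exp_ineq1_le (- y)). lra. Qed.

Lemma sum_bound (T : nat -> R) w r : 0 <= w < 1 -> 0 <= r -> T 0%nat = 0 ->
  (forall m, (1 <= m)%nat -> Rabs (T m) <= r * w ^ m) ->
  forall N, Rabs (sum_f_R0 T N) <= r * w / (1 - w).
Proof.
  intros Hw Hr H0 Hm N.
  assert (Hs : Rabs (sum_f_R0 T N) <= r * w * (1 - w ^ N) / (1 - w)).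
  { induction N.
    - simpl. rewrite H0, Rabs_R0. simpl. replace (r * w * (1 - 1) / (1 - w)) with 0 by (field; lra). lra.
    - simpl sum_f_R0. eapply Rle_trans. apply Rabs_triang.
      eapply Rle_trans. apply Rplus_le_compat. exact IHN. apply Hm. lia.
      right. simpl. field. lra. }
  eapply Rle_trans. exact Hs. unfold Rdiv. apply Rmult_le_compat_r.
  left; apply Rinv_0_lt_compat; lra.
  assert (0 <= w ^ N) by (apply pow_le; lra).
  assert (0 <= r * w * w ^ N) by (apply Rmult_le_pos; [apply Rmult_le_pos|]; lra). lra.
Qed.

Lemma Tm0 F u a1 a2 x : Tm F u a1 a2 x 0 = 0.
Proof. unfold Tm. simpl. rewrite !Rmult_0_l, Ropp_0. ring. Qed.

Lemma Tm_bound (F : R -> R) u rho d x z0 a1 a2 m : (1 <= m)%nat -> 0 < x -> z0 <= x -> 0 < a1 <= a2 ->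
  (forall z, z0 <= z -> Rabs (Phi F u z) <= rho * exp (d * z)) ->
  Rabs (Tm F u a1 a2 x m) <= rho * exp (- (x * (a1 - d))) ^ m.
Proof.
  intros Hm Hx Hz Ha HP.
  assert (Hm1 : 1 <= INR m) by (apply (le_INR 1); lia).
  unfold Tm. rewrite !Rabs_mult.
  assert (H1 : Rabs ((-1) ^ m / INR (fact m)) <= 1).
  { unfold Rdiv. rewrite Rabs_mult, pow_1_abs, Rabs_inv.
    rewrite Rabs_right by (left; apply INR_fact_lt_0).
    rewrite Rmult_1_l. rewrite <- Rinv_1. apply Rinv_le_contravar. lra.
    apply (le_INR 1). apply lt_O_fact. }
  assert (H2 : Rabs (exp (- (INR m * x * a2)) - exp (- (INR m * x * a1))) <= exp (- (INR m * x * a1))).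
  { assert (exp (- (INR m * x * a2)) <= exp (- (INR m * x * a1))).
    { destruct (Req_dec a1 a2). subst; lra. left. apply exp_increasing.
      assert (0 < INR m * x) by nra. nra. }
    assert (0 < exp (- (INR m * x * a2))) by apply exp_pos.
    rewrite Rabs_left1; lra. }
  assert (H3 : Rabs (Phi F u (INR m * x)) <= rho * exp (d * (INR m * x))).
  { apply HP. nra. }
  rewrite exp_pow.
  replace (rho * exp (INR m * - (x * (a1 - d)))) with (1 * exp (- (INR m * x * a1)) * (rho * exp (d * (INR m * x)))).
  2: { rewrite Rmult_1_l. rewrite Rmult_comm, Rmult_assoc, <- exp_plus. f_equal. f_equal. ring. }
  apply Rmult_le_compat; try apply Rabs_pos.
  apply Rmult_le_pos; apply Rabs_pos.
  apply Rmult_le_compat; try apply Rabs_pos; assumption.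
  exact H3.
Qed.


Lemma core (F : R -> R) (u rho c δ M z0 : R) :
  (forall s : R, continuous F s) -> 0 < δ <= u -> 0 < c -> 0 < rho ->
  (forall s, u - δ <= s <= u -> c <= F s) ->
  (forall s, 0 <= s <= u -> Rabs (F s) <= M) ->
  (forall z, z0 <= z -> Rabs (Phi F u z) <= rho * exp (δ / 8 * z)) -> False.
Proof.
  intros HF Hδ Hc Hrho HFc HM HP.
  assert (HM0 : 0 <= M) by (eapply Rle_trans; [apply Rabs_pos | apply (HM u); lra]).
  set (K := (2 * u * M + 16 * rho) * 64 / (c * δ ^ 2)).
  assert (HK : 0 <= K).
  { unfold K. apply Rdiv_le_0_compat. assert (0 <= u * M) by nra. nra. 
    apply Rmult_lt_0_compat; [lra| apply pow_lt; lra]. }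
  set (x := Rmax z0 1 + 48 / δ + K).
  assert (Hx1 : 1 <= x) by (unfold x; assert (0 < 48/δ) by (apply Rdiv_lt_0_compat; lra); pose proof (Rmax_r z0 1); lra).
  assert (Hxz : z0 <= x) by (unfold x; assert (0 < 48/δ) by (apply Rdiv_lt_0_compat; lra); pose proof (Rmax_l z0 1); lra).
  assert (Hxd : 48 <= x * δ).
  { assert (48 / δ <= x) by (unfold x; pose proof (Rmax_r z0 1); lra).
    apply Rmult_le_compat_r with (r := δ) in H. 2: lra. unfold Rdiv in H. rewrite Rmult_assoc, Rinv_l in H; lra. }
  assert (HxK : (2 * u * M + 16 * rho) * 64 <= x * (c * δ ^ 2)).
  { assert (K <= x) by (unfold x; pose proof (Rmax_r z0 1); assert (0 < 48/δ) by (apply Rdiv_lt_0_compat; lra); lra).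
    assert (0 < c * δ ^ 2) by (apply Rmult_lt_0_compat; [lra| apply pow_lt; lra]).
    apply Rmult_le_compat_r with (r := c * δ ^ 2) in H. 2: lra. unfold K, Rdiv in H.
    rewrite Rmult_assoc, Rinv_l in H; lra. }
  clearbody x.
  set (y2 := fun s => ya u (δ / 2) x s). set (y1 := fun s => ya u (δ / 4) x s).
  set (D := fun s => exp (- y2 s) - exp (- y1 s)).
  assert (HexD : forall a b, ex_RInt (fun s => F s * D s) a b).
  { intros a b. apply exint. exact HF. intros s. unfold D, y1, y2, ya. auto_derive. auto. }
  assert (Hx0 : 0 < x) by lra.
  assert (Hy12 : forall s, y2 s <= y1 s).
  { intros s. unfold y1, y2, ya. left. apply exp_increasing. nra. }
  assert (HD0 : forall s, 0 <= D s).
  { intros s. unfold D. specialize (Hy12 s).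
    destruct Hy12 as [H|H]. left. apply Rlt_Rminus. apply exp_increasing. lra. rewrite H. lra. }
  assert (HDtail : forall s, s <= u - δ -> D s <= 2 / (x * δ)).
  { intros s Hs. unfold D.
    assert (0 < exp (- y1 s)) by apply exp_pos.
    assert (1 + x * δ / 2 <= y2 s).
    { unfold y2, ya. eapply Rle_trans. 2: apply exp_ineq1_le. nra. }
    assert (exp (- y2 s) <= / (1 + y2 s)) by (apply exp_neg_le; lra).
    assert (/ (1 + y2 s) <= 2 / (x * δ)).
    { unfold Rdiv. rewrite <- (Rinv_inv 2). rewrite <- Rinv_mult. apply Rinv_le_contravar.
      apply Rmult_lt_0_compat; lra. lra. }
    lra. }
  assert (HDmid : forall s, u - 7 * δ / 16 <= s <= u - 5 * δ / 16 -> 1 / 2 <= D s).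
  { intros s Hs. unfold D.
    assert (Ha : 1 + x * δ / 16 <= y1 s).
    { unfold y1, ya. eapply Rle_trans. 2: apply exp_ineq1_le. nra. }
    assert (Hb : y2 s <= / (1 + x * δ / 16)).
    { unfold y2, ya. replace (x * (u - δ / 2 - s)) with (- (x * (s - u + δ / 2))) by ring.
      eapply Rle_trans. apply exp_neg_le. nra. apply Rinv_le_contravar; nra. }
    assert (exp (- y1 s) <= / (1 + y1 s)) by (apply exp_neg_le; lra).
    assert (/ (1 + y1 s) <= / 4) by (apply Rinv_le_contravar; lra).
    assert (/ (1 + x * δ / 16) <= / 4) by (apply Rinv_le_contravar; lra).
    assert (1 - y2 s <= exp (- y2 s)) by apply exp_neg_ge.
    lra. }
  assert (Hyb : forall s a, 0 <= s -> 0 < a -> 0 < ya u a x s <= exp (x * u)).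
  { intros s a Hs Ha. split. apply exp_pos. unfold ya. destruct (Rle_lt_dec (x * (u - a - s)) (x * u)) as [H|H].
    destruct H. left; apply exp_increasing; auto. rewrite H; lra. nra. }
  set (Y := exp (x * u)).
  set (eps := c * δ / (128 * (u * M + 1))).
  assert (Heps : 0 < eps).
  { unfold eps. apply Rdiv_lt_0_compat. nra. assert (0 <= u * M) by nra. lra. }
  destruct (cv_speed_pow_fact Y eps Heps) as [N0 HN0].
  assert (HN : Y ^ S N0 / INR (fact (S N0)) < eps).
  { specialize (HN0 (S N0) ltac:(lia)). unfold R_dist in HN0. rewrite Rminus_0_r in HN0.
    eapply Rle_lt_trans. apply Rle_abs. exact HN0. }
  destruct (interchange F u (δ / 4) (δ / 2) x HF N0) as [HexG HG].
  set (G := RInt (fun s => F s * (Sp N0 (ya u (δ / 2) x s) - Sp N0 (ya u (δ / 4) x s))) 0 u) in *.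
  set (f := fun s => F s * D s).
  set (I := RInt f 0 u).
  assert (HIG : Rabs (I - G) <= (u - 0) * (M * (2 * eps))).
  { assert (E1 : RInt (fun s => minus (f s) (F s * (Sp N0 (ya u (δ / 2) x s) - Sp N0 (ya u (δ / 4) x s)))) 0 u = minus I G).
    { apply (RInt_minus (V := R_CompleteNormedModule)). apply HexD. exact HexG. }
    change (minus I G) with (I - G) in E1. rewrite <- E1.
    apply abs_RInt_le_const. lra.
    apply (ex_RInt_minus (V := R_NormedModule)). apply HexD. exact HexG.
    intros t Ht. change (minus ?a ?b) with (a - b). unfold f, D, y1, y2.
    replace (F t * (exp (- ya u (δ / 2) x t) - exp (- ya u (δ / 4) x t)) -
       F t * (Sp N0 (ya u (δ / 2) x t) - Sp N0 (ya u (δ / 4) x t)))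
      with (F t * ((exp (- ya u (δ / 2) x t) - Sp N0 (ya u (δ / 2) x t)) - (exp (- ya u (δ / 4) x t) - Sp N0 (ya u (δ / 4) x t)))) by ring.
    rewrite Rabs_mult. apply Rmult_le_compat. apply Rabs_pos. apply Rabs_pos. apply HM; lra.
    assert (Hb : forall a, 0 < a -> Rabs (exp (- ya u a x t) - Sp N0 (ya u a x t)) <= eps).
    { intros a Ha. destruct (Hyb t a ltac:(lra) Ha) as [Hy0 Hy1].
      eapply Rle_trans. apply taylor_bound. exact Hy0. left. eapply Rle_lt_trans. 2: exact HN.
      unfold Rdiv. apply Rmult_le_compat_r. left; apply Rinv_0_lt_compat, INR_fact_lt_0.
      apply pow_incr. unfold Y. lra. }
    eapply Rle_trans. unfold Rminus at 1. apply Rabs_triang. rewrite Rabs_Ropp.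
    assert (H1 := Hb (δ / 2) ltac:(lra)). assert (H2 := Hb (δ / 4) ltac:(lra)). lra. }
  set (Z := / (x * δ)).
  assert (HZ : x * δ * Z = 1) by (unfold Z; field; lra).
  assert (HZ0 : 0 < Z) by (unfold Z; apply Rinv_0_lt_compat; nra).
  set (w := exp (- (x * (δ / 4 - δ / 8)))).
  assert (Hw : w <= 8 * Z).
  { unfold w. eapply Rle_trans. apply exp_neg_le. nra.
    assert (HZ' : 8 * Z = / (x * δ / 8)) by (unfold Z; field; lra). rewrite HZ'.
    apply Rinv_le_contravar; nra. }
  assert (Hw0 : 0 < w) by apply exp_pos.
  assert (HZs : Z <= / 48).
  { unfold Z. apply Rinv_le_contravar; lra. }
  assert (HGb : Rabs G <= rho * w / (1 - w)).
  { rewrite HG. apply sum_bound. lra. lra. apply Tm0.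
    intros m Hm. apply (Tm_bound F u rho (δ / 8) x z0); auto. lra. }
  assert (HGb2 : Rabs G <= 16 * rho * Z).
  { eapply Rle_trans. exact HGb. unfold Rdiv.
    assert (/ (1 - w) <= 2).
    { replace 2 with (/ (1/2)) by field. apply Rinv_le_contravar; lra. }
    assert (0 <= / (1 - w)) by (left; apply Rinv_0_lt_compat; lra).
    assert (rho * w <= rho * (8 * Z)) by (apply Rmult_le_compat_l; lra).
    assert (rho * w * / (1 - w) <= rho * (8 * Z) * 2).
    { apply Rmult_le_compat; try lra. nra. }
    lra. }
  set (p := u - 7 * δ / 16). set (q := u - 5 * δ / 16).
  assert (C1 : RInt f 0 (u - δ) + RInt f (u - δ) u = I) by exact (RInt_Chasles (V := R_CompleteNormedModule) f 0 (u - δ) u (HexD _ _) (HexD _ _)).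
  assert (C2 : RInt f (u - δ) p + RInt f p u = RInt f (u - δ) u) by exact (RInt_Chasles (V := R_CompleteNormedModule) f (u - δ) p u (HexD _ _) (HexD _ _)).
  assert (C3 : RInt f p q + RInt f q u = RInt f p u) by exact (RInt_Chasles (V := R_CompleteNormedModule) f p q u (HexD _ _) (HexD _ _)).
  assert (HA : Rabs (RInt f 0 (u - δ)) <= (u - δ - 0) * (M * (2 * Z))).
  { apply abs_RInt_le_const. lra. apply HexD. intros t Ht. unfold f. rewrite Rabs_mult.
    apply Rmult_le_compat; try apply Rabs_pos. apply HM; lra.
    rewrite Rabs_right by (apply Rle_ge, HD0). apply HDtail; lra. }
  assert (HB1 : 0 <= RInt f (u - δ) p).
  { apply RInt_ge_0. unfold p; lra. apply HexD. intros t Ht. unfold f.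
    apply Rmult_le_pos. assert (c <= F t) by (apply HFc; unfold p in Ht; lra). lra. apply HD0. }
  assert (HB3 : 0 <= RInt f q u).
  { apply RInt_ge_0. unfold q; lra. apply HexD. intros t Ht. unfold f.
    apply Rmult_le_pos. assert (c <= F t) by (apply HFc; unfold q in Ht; lra). lra. apply HD0. }
  assert (HB2 : (q - p) * (c / 2) <= RInt f p q).
  { assert (E := RInt_const (V := R_CompleteNormedModule) p q (c / 2)).
    change (scal (q - p) (c / 2)) with ((q - p) * (c / 2)) in E. rewrite <- E.
    apply RInt_le. unfold p, q; lra. apply ex_RInt_const. apply HexD.
    intros t Ht. unfold f. unfold p, q in Ht.
    assert (c <= F t) by (apply HFc; lra). assert (1 / 2 <= D t) by (apply HDmid; lra).
    replace (c / 2) with (c * (1 / 2)) by field. apply Rmult_le_compat; lra. }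
  assert (HuM : 0 <= u * M) by nra.
  assert (F1 : u * (M * (2 * eps)) <= c * δ / 64).
  { assert (E : eps * (128 * (u * M + 1)) = c * δ) by (unfold eps; field; lra). nra. }
  assert (F2 : (2 * u * M + 16 * rho) * 64 * Z <= c * δ).
  { assert (0 < c * δ) by nra. nra. }
  assert (Hqp : q - p = δ / 8) by (unfold p, q; field).
  rewrite Hqp in HB2.
  assert (HA' : (u - δ - 0) * (M * (2 * Z)) <= u * M * 2 * Z) by nra.
  assert (Habs1 := Rabs_triang_inv I G).
  assert (Habs2 : - Rabs (RInt f 0 (u - δ)) <= RInt f 0 (u - δ)) by (apply Rabs_maj2 || (pose proof (Rle_abs (- RInt f 0 (u - δ))); rewrite Rabs_Ropp in *; lra)).
  assert (I <= Rabs I) by apply Rle_abs.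
  nra.
Qed.


Theorem lemma4p5 (f : R -> R) (u rho : R)
  (Hf : continuous_on_01 f) (Hu : 0 < u <= 1) (Hrho : 0 < rho)
  (Hfu : f u <> 0) :
  exists d : R, 0 < d /\
    exists r : nat -> R, is_lim_seq r p_infty /\
      forall k : nat, Rabs (Phi f u (r k)) > rho * exp (d * r k).
Proof.
  set (σ := if Rlt_dec 0 (f u) then 1 else -1).
  assert (Hσ : Rabs σ = 1) by (unfold σ; destruct Rlt_dec; unfold Rabs; destruct Rcase_abs; lra).
  assert (Hσu : 0 < σ * f u).
  { unfold σ; destruct Rlt_dec. lra. assert (f u < 0) by (destruct (Rtotal_order (f u) 0) as [H|[H|H]]; lra). lra. }
  set (F := fun s => σ * f (clamp s)).
  assert (HF : forall s : R, continuous F s).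
  { intros s. unfold F. apply (continuous_mult (fun _ => σ) (fun t => f (clamp t))).
    apply continuous_const. apply clamp_cont, Hf. }
  assert (HFu : F u = σ * f u) by (unfold F; rewrite clamp_id; lra).
  assert (HPhi : forall z, Rabs (Phi F u z) = Rabs (Phi f u z)).
  { intros z. unfold Phi.
    rewrite (RInt_ext (V := R_CompleteNormedModule) _ (fun s => scal σ (f s * exp ((u - s) * z)))).
    2: { intros s Hs. rewrite Rmin_left in Hs by lra. rewrite Rmax_right in Hs by lra.
         unfold F. rewrite clamp_id by lra. change (scal σ ?a) with (σ * a). apply Rmult_assoc. }
    assert (Hex : ex_RInt (fun s => f s * exp ((u - s) * z)) 0 u).
    { apply (ex_RInt_ext (V := R_NormedModule) (fun s => / σ * (F s * exp ((u - s) * z)))).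
      intros s Hs. rewrite Rmin_left in Hs by lra. rewrite Rmax_right in Hs by lra.
      unfold F. rewrite clamp_id by lra. rewrite <- !Rmult_assoc, Rinv_l, Rmult_1_l. reflexivity. intro H0; rewrite H0, Rabs_R0 in Hσ; lra.
      apply (ex_RInt_scal (V := R_NormedModule) (fun s => F s * exp ((u - s) * z))). apply ex_Phi. exact HF. }
    rewrite (RInt_scal (V := R_CompleteNormedModule)) by exact Hex.
    change (scal σ ?a) with (σ * a). rewrite Rabs_mult, Hσ. ring. }
  assert (Hc0 : 0 < F u / 2) by lra.
  destruct (proj1 (filterlim_locally F (F u)) (HF u) (mkposreal _ Hc0)) as [δ0 Hδ0].
  set (δ := Rmin (δ0 / 2) u).
  assert (Hδ : 0 < δ <= u).
  { unfold δ. split. apply Rmin_glb_lt. destruct δ0; simpl; lra. lra. apply Rmin_r. }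
  assert (HFc : forall s, u - δ <= s <= u -> F u / 2 <= F s).
  { intros s Hs. assert (δ <= δ0 / 2) by apply Rmin_l.
    assert (Hb : ball u δ0 s).
    { unfold ball; simpl; unfold AbsRing_ball, abs, minus, plus, opp; simpl.
      rewrite Rabs_left1 by lra. destruct δ0; simpl in *; lra. }
    specialize (Hδ0 s Hb). unfold ball in Hδ0; simpl in Hδ0; unfold AbsRing_ball, abs, minus, plus, opp in Hδ0; simpl in Hδ0.
    apply Rabs_def2 in Hδ0. lra. }
  destruct (continuity_ab_maj (fun s => Rabs (F s)) 0 u ltac:(lra)) as [m [Hm _]].
  { intros s _. apply (continuity_pt_comp F Rabs). apply continuity_pt_filterlim, HF. apply Rcontinuity_abs. }
  set (M := Rabs (F m)).
  exists (δ / 8). split. unfold δ in *; lra.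
  assert (Hex : forall n : nat, exists z, INR n <= z /\ Rabs (Phi f u z) > rho * exp (δ / 8 * z)).
  { intros n. apply NNPP. intros Hn.
    apply (core F u rho (F u / 2) δ M (INR n) HF Hδ Hc0 Hrho HFc).
    - intros s Hs. apply Hm. exact Hs.
    - intros z Hz. rewrite HPhi. apply Rnot_lt_le. intros Hlt. apply Hn. exists z. split; auto. }
  exists (fun n => proj1_sig (constructive_indefinite_description _ (Hex n))).
  split.
  - apply (is_lim_seq_le_p_loc INR). 2: apply is_lim_seq_INR.
    exists 0%nat. intros n _. exact (proj1 (proj2_sig (constructive_indefinite_description _ (Hex n)))).
  - intros k. exact (proj2 (proj2_sig (constructive_indefinite_description _ (Hex k)))).
Qed.
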